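(* Let $\Gamma$ be a triangulation of a connected closed surface with a $z$-orientation such that all faces are of type I and all zigzags are homogeneous. If $\Gamma$ has exactly two vertices of type I, then $\Gamma$ is (isomorphic to) a bipyramid $BP_n$ for some $n\ge3$.
   Context: A triangulation of a connected closed surface $M$ is a $2$-cell embedding of a connected simple finite graph in $M$ with all faces triangles. A zigzag is a sequence of edges $(e_i)$ such that $e_i,e_{i+1}$ are distinct edges of a common face, the face containing $e_i,e_{i+1}$ differs from that containing $e_{i+1},e_{i+2}$, and $e_i,e_{i+2}$ have no common vertex; it is a cyclic sequence passing through each edge in a definite direction; its reversal is a zigzag. A $z$-orientation is a set of zigzags containing exactly one of $Z,Z^{-1}$ for each zigzag $Z$; each edge is passed twice in total by its zigzags and is of type I if the two passages have opposite directions, of type II otherwise. A vertex is of type I if all its edges are of type I. A face is of type I if it contains exactly two edges of type I. When all faces are of type I, a zigzag is homogeneous if it is a cyclic sequence $e_1,e_1',e_1'',\dots,e_m,e_m',e_m''$ with the $e_i$ of type II and the $e_i',e_i''$ of type I. The bipyramid $BP_n$ is the triangulation of the sphere with vertices $1,\dots,n,a,b$, edges $i(i+1)$ (mod $n$), $ai$, $bi$, and faces $\{a,i,i+1\},\{b,i,i+1\}$. *)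

(* Defs.v *)
From mathcomp Require Import all_boot.
Set Implicit Arguments. Unset Strict Implicit. Unset Printing Implicit Defensive.

Section Tri.
Variable V : finType.
Variable F : {set {set V}}.

Definition adj : rel V :=
  fun u v => (u != v) && [exists f in F, (u \in f) && (v \in f)].

Definition link (v : V) : rel V := fun x y => [set v; x; y] \in F.

Definition is_triangulation : Prop :=
  0 < #|V| /\
  [/\ forall f, f \in F -> #|f| = 3,
      forall u v, adj u v -> #|[set f in F | (u \in f) && (v \in f)]| = 2,
      forall v, exists2 f, f \in F & v \in f,
      forall v x y, adj v x -> adj v y -> connect (link v) x y
    & forall u v, connect adj u v ].

(* Zigzags are encoded by "states" (x_i, x_(i+1), x_(i+2)) *)
Definition state := (V * V * V)%type.
Definition isState (s : state) : bool := [set s.1.1; s.1.2; s.2] \in F.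

Definition zstep (s t : state) : bool :=
  [&& t.1.1 == s.1.2, t.1.2 == s.2, isState s, isState t & t.2 != s.1.1].

Definition rev3 (s : state) : state := (s.2, s.1.2, s.1.1).

(* S = set of states lying on the zigzags of the z-orientation *)
Definition z_orientation (S : pred state) : Prop :=
  (forall s t, zstep s t -> S t = S s) /\
  (forall s, isState s -> S (rev3 s) = ~~ S s).

(* number of passages of the directed edge u -> v *)
Definition npass (S : pred state) (u v : V) : nat :=
  #|[set s : state | [&& isState s, S s & s.1 == (u, v)]]|.

Definition edgeI (S : pred state) (u v : V) : bool :=
  (npass S u v == 1) && (npass S v u == 1).

Definition vertexI (S : pred state) (v : V) : bool :=
  [forall u, adj v u ==> edgeI S v u].

Definition faceI (S : pred state) (f : {set V}) : bool :=
  [forall a, forall b, forall c,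
     ([set a; b; c] == f) ==> (edgeI S a b + edgeI S b c + edgeI S c a == 2)].

Definition all_homogeneous (S : pred state) : Prop :=
  forall s t r, S s -> zstep s t -> zstep t r ->
    ~~ edgeI S s.1.1 s.1.2 + ~~ edgeI S t.1.1 t.1.2 + ~~ edgeI S r.1.1 r.1.2 = 1.

End Tri.

(* Bipyramid BP_n: ring vertices inl i, apexes a = inr true, b = inr false *)
Definition BPV (n : nat) : finType := ('I_n + bool)%type.
Definition BPfaces (n : nat) : {set {set BPV n}} :=
  [set [set (inr true : BPV n); inl i; inl (ordS i)] | i : 'I_n] :|:
  [set [set (inr false : BPV n); inl i; inl (ordS i)] | i : 'I_n].

Definition tri_iso (V W : finType) (F : {set {set V}}) (G : {set {set W}}) : Prop :=
  exists g : V -> W, bijective g /\ forall X : {set V}, (X \in F) = (g @: X \in G).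

(* Main.v *)
Require Import Defs.
From mathcomp Require Import all_boot.
Set Implicit Arguments. Unset Strict Implicit. Unset Printing Implicit Defensive.


Section Cyc.
Variable T : finType.
Variable e : rel T.
Hypothesis esym : forall p q, e p q -> e q p.
Hypothesis eirr : forall p q, e p q -> p != q.
Hypothesis e3 : forall p q1 q2 q3, e p q1 -> e p q2 -> e p q3 ->
  q1 != q2 -> q1 != q3 -> q2 != q3 -> False.
Hypothesis eex : forall p q, e p q -> exists2 r, r != q & e p r.
Variables x0 x1 : T.
Hypothesis e01 : e x0 x1.

Definition other (p q : T) := odflt q [pick r | e q r && (r != p)].
Lemma other_spec p q : e p q -> e q (other p q) /\ other p q != p.
Proof.
move=> H; rewrite /other; case: pickP => [r /andP [] //|H0].
have [r rp Hr] := eex (esym H); by move: (H0 r); rewrite Hr rp.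
Qed.
Definition stp (pq : T * T) := (pq.2, other pq.1 pq.2).
Definition E i := iter i stp (x0, x1).
Definition x i := (E i).1.
Lemma E_e i : e (E i).1 (E i).2.
Proof. elim: i => [|i IH] //=; exact: (other_spec IH).1. Qed.
Lemma xS i : x i.+1 = (E i).2.
Proof. by []. Qed.
Lemma x_e i : e (x i) (x i.+1).
Proof. rewrite xS; exact: E_e. Qed.
Lemma x_nb i : x i.+2 != x i.
Proof. exact: (other_spec (E_e i)).2. Qed.
Lemma x_nbr i y : e (x i.+1) y -> y = x i \/ y = x i.+2.
Proof.
move=> H.
case: (eqVneq y (x i)) => [->|yi]; first by left.
case: (eqVneq y (x i.+2)) => [->|yi2]; first by right.
exfalso; apply: (e3 (esym (x_e i)) (x_e i.+1) H).
- by rewrite eq_sym x_nb.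
- by rewrite eq_sym.
- by rewrite eq_sym.
Qed.

Definition Pr j := (0 < j) && has (fun k => x k == x j) (iota 0 j).

Lemma pig : exists j, Pr j.
Proof.
have : ~~ uniq (map x (iota 0 #|T|.+1)).
  apply/negP=> /card_uniqP; rewrite size_map size_iota => H.
  by have := max_card (mem (map x (iota 0 #|T|.+1))); rewrite H ltnn.
case/(uniqPn x0) => i [j [ij]]; rewrite size_map size_iota => jN.
rewrite !(nth_map 0) ?size_iota ?(ltn_trans ij) // !nth_iota ?(ltn_trans ij) // !add0n => E.
exists j; rewrite /Pr (leq_ltn_trans _ ij) //=; apply/hasP; exists i; first by rewrite mem_iota.
by rewrite E.
Qed.

Lemma ret m : 0 < m -> (forall i k, i < k -> k < m -> x i != x k) ->
  (exists2 i, i < m & x i = x m) -> x m = x 0.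
Proof.
case: m => [//|m] _ D1 [[|i] im xim]; first by rewrite xim.
have im' : i < m by [].
have := esym (x_e m); rewrite -xim => /x_nbr [] Em.
  by have := D1 _ _ im' (ltnSn m); rewrite Em eqxx.
case: (ltngtP i.+2 m) => c.
- by have := D1 _ _ c (ltnSn m); rewrite Em eqxx.
- have mi : m = i.+1 by apply/eqP; rewrite eqn_leq im' -ltnS c.
  by have := eirr (x_e m); rewrite {1}Em mi eqxx.
- by have := x_nb i.+1; rewrite xim -c eqxx.
Qed.

Lemma cycle_main : exists n : nat, exists xx : nat -> T,
  [/\ 3 <= n, xx 0 = x0,
      (forall i j, i < n -> j < n -> xx i = xx j -> i = j) &
    [/\  (forall i, xx (i %% n) = xx i),
      (forall i, e (xx i) (xx i.+1)),
      (forall p q, connect e x0 p -> e p q -> exists2 j, j < n &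
          ((p == xx j) && (q == xx j.+1)) || ((q == xx j) && (p == xx j.+1)))
    & (forall y, connect e x0 y -> exists2 i, i < n & y = xx i)]].
Proof.
have [m Pm minm] := ex_minnP pig.
have m0 : 0 < m by case/andP: Pm.
have D1 i k : i < k -> k < m -> x i != x k.
  move=> ik km; apply/eqP=> Exik.
  have : Pr k.
    rewrite /Pr (leq_ltn_trans _ ik) //=; apply/hasP; exists i; first by rewrite mem_iota.
    by rewrite Exik.
  by move/minm; rewrite leqNgt km.
have xm0 : x m = x 0.
  apply: ret => //; case/andP: Pm => _ /hasP [i]; rewrite mem_iota /= add0n => im /eqP xim.
  by exists i.
have m3 : 3 <= m.
  case: m m0 xm0 {Pm minm D1} => [//|[|[|m]]] // _.
  - by have := eirr (x_e 0); rewrite eq_sym => /eqP.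
  - by move=> E2; have := x_nb 0; rewrite E2 eqxx.
have xm1 : x m.+1 = x 1.
  have H : e (x m.-1.+1) (x 1) by rewrite prednK // xm0; exact: x_e.
  case: (x_nbr H) => [E1|]; last by rewrite prednK // => ->.
  have : 1 < m.-1 by rewrite -subn1 ltn_subRL addn1.
  by move/D1 => /(_ (etrans (ltn_predL m) m0)); rewrite E1 eqxx.
have Em : E m = E 0.
  rewrite (surjective_pairing (E m)) (surjective_pairing (E 0)); congr pair; first exact: xm0.
  by rewrite -(xS m) -(xS 0) xm1.
have per k : x (k + m) = x k by rewrite /x /E iterD -/(E m) Em.
have xmod i : x (i %% m) = x i.
  rewrite [in RHS](divn_eq i m); elim: (i %/ m) => [|q IH]; first by rewrite mul0n add0n.
  by rewrite mulSn -addnA addnC per.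
have edge p q : (exists2 i, i < m & p = x i) -> e p q -> exists2 j, j < m &
          ((p == x j) && (q == x j.+1)) || ((q == x j) && (p == x j.+1)).
  case=> -[|i] im -> Hq.
    have Hq' : e (x m.-1.+1) q by rewrite prednK // xm0.
    case: (x_nbr Hq') => ->.
      by exists m.-1; [by rewrite ltn_predL | rewrite prednK // xm0 !eqxx orbT].
    by exists 0 => //; rewrite prednK // xm1 !eqxx.
  case: (x_nbr Hq) => ->.
    by exists i; [exact: ltnW | rewrite !eqxx orbT].
  by exists i.+1 => //; rewrite !eqxx.
have cover y : connect e x0 y -> exists2 i, i < m & y = x i.
  case/connectP=> p pth ->.
  have : exists2 i, i < m & x0 = x i by exists 0.
  elim: p x0 pth => [|r p IH] z //= /andP [Hzr pth] Wz.
  apply: IH pth _; have [j jm /orP [/andP [_ /eqP ->]|/andP [/eqP -> _]]] := edge _ _ Wz Hzr.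
    by exists (j.+1 %% m); [exact: ltn_pmod | rewrite xmod].
  by exists j.
exists m, x; split => //; last split => //.
- move=> i j im jm Eij; case: (ltngtP i j) => // c.
    by have := D1 _ _ c jm; rewrite Eij eqxx.
  by have := D1 _ _ c im; rewrite Eij eqxx.
- exact: x_e.
- by move=> p q /cover; apply: edge.
Qed.

End Cyc.

Section Main.
Variable V : finType.
Variable F : {set {set V}}.
Variable S : pred (state V).
Hypothesis Hf3 : forall f, f \in F -> #|f| = 3.
Hypothesis Hedge2 : forall u v, adj F u v -> #|[set f in F | (u \in f) && (v \in f)]| = 2.
Hypothesis HS1 : forall s t, zstep F s t -> S t = S s.
Hypothesis HS2 : forall s, isState F s -> S (rev3 s) = ~~ S s.
Hypothesis Hface : forall f, f \in F -> faceI F S f.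
Hypothesis Hhom : all_homogeneous F S.
Hypothesis Hcov : forall v, exists2 f, f \in F & v \in f.
Hypothesis Hlink : forall v x y, adj F v x -> adj F v y -> connect (link F v) x y.

Lemma s3_12 (x y z : V) : [set x; y; z] = [set y; x; z].
Proof. by apply/setP=> t; rewrite !inE; case: (t==x); case: (t==y); case: (t==z). Qed.
Lemma s3_23 (x y z : V) : [set x; y; z] = [set x; z; y].
Proof. by apply/setP=> t; rewrite !inE; case: (t==x); case: (t==y); case: (t==z). Qed.
Lemma s3_r (x y z : V) : [set x; y; z] = [set y; z; x].
Proof. by apply/setP=> t; rewrite !inE; case: (t==x); case: (t==y); case: (t==z). Qed.

Lemma face_neq (x y z : V) : [set x; y; z] \in F -> [/\ x != y, y != z & x != z].
Proof.
move=> /Hf3 H.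
have cU (a b c : V) : #|[set a; b; c]| = 3 -> a != b.
  move=> H3; apply/eqP=> Eab; move: H3; rewrite Eab.
  have -> : [set b; b; c] = [set b; c] by apply/setP=> t; rewrite !inE; case: (t==b); case: (t==c).
  by rewrite cards2; case: (b != c).
split; first exact: cU H.
  by apply: (cU y z x); rewrite -s3_r.
by apply: (cU x z y); rewrite -s3_23.
Qed.

Lemma adj_face (x y z : V) : [set x; y; z] \in F -> adj F x y.
Proof.
move=> H; have [xy _ _] := face_neq H; rewrite /adj xy /=.
by apply/existsP; exists [set x; y; z]; rewrite H !inE !eqxx /= orbT.
Qed.

Lemma face_dec (f : {set V}) (y z : V) : f \in F -> y \in f -> z \in f -> y != z ->
  exists w, f = [set y; z; w].
Proof.
move=> fF yf zf yz.
have : #|f :\: [set y; z]| == 1.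
  have := cardsID [set y; z] f; rewrite (Hf3 fF).
  have -> : f :&: [set y; z] = [set y; z].
    by apply/setP=> t; rewrite !inE; case: eqP => [->|_]; case: eqP => [->|_]; rewrite ?yf ?zf ?andbF.
  by rewrite cards2 yz add2n => -[->].
case/cards1P=> w Hw; exists w; apply/setP=> t.
have := congr1 (fun A : {set V} => t \in A) Hw; rewrite !inE /=.
case: (eqVneq t y) => [->|ty]; first by rewrite yf.
case: (eqVneq t z) => [->|tz]; first by rewrite zf orbT.
by rewrite /= => ->.
Qed.

Lemma s3_l (x y z : V) : [set x; y; z] = [set z; x; y].
Proof. by apply/setP=> t; rewrite !inE; case: (t==x); case: (t==y); case: (t==z). Qed.
Lemma s3_rev (x y z : V) : [set x; y; z] = [set z; y; x].
Proof. by apply/setP=> t; rewrite !inE; case: (t==x); case: (t==y); case: (t==z). Qed.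

Lemma set3_inj (y z w1 w2 : V) : [set y; z; w1] \in F ->
  [set y; z; w1] = [set y; z; w2] -> w1 = w2.
Proof.
move=> H E; have [yz zw yw] := face_neq H.
have := congr1 (fun A : {set V} => w1 \in A) E; rewrite !inE eqxx orbT /=.
by rewrite eq_sym (negPf yw) eq_sym (negPf zw) /= => /esym /eqP.
Qed.

Lemma other_face (x y z : V) : [set x; y; z] \in F ->
  exists w, w != x /\ [set y; z; w] \in F.
Proof.
move=> H.
have Hyz : adj F y z by apply: (@adj_face y z x); rewrite -s3_r.
have := Hedge2 Hyz.
set A := [set f in F | _ & _].
have f0A : [set x; y; z] \in A by rewrite inE H !inE !eqxx /= !orbT.
rewrite (cardsD1 [set x; y; z]) f0A add1n => -[] /eqP /cards1P [f1 Hf1].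
have : f1 \in A :\ [set x; y; z] by rewrite Hf1 inE.
rewrite !inE => /and3P [nf1 f1F /andP [yf1 zf1]].
have [yz _ _] := face_neq (etrans (esym (congr1 (fun A => A \in F) (s3_r x y z))) H).
have [w Ew] := face_dec f1F yf1 zf1 yz.
exists w; split; last by rewrite -Ew.
apply/eqP=> Ewx; move: nf1; rewrite Ew Ewx.
by rewrite -s3_r eqxx.
Qed.

Lemma at_most_two (y z w1 w2 w3 : V) :
  [set y; z; w1] \in F -> [set y; z; w2] \in F -> [set y; z; w3] \in F ->
  w1 != w2 -> w1 != w3 -> w2 != w3 -> False.
Proof.
move=> H1 H2 H3 n12 n13 n23.
have Hyz : adj F y z by apply: (adj_face H1).
have := Hedge2 Hyz.
set A := [set f in F | _ & _].
have inA w : [set y; z; w] \in F -> [set y; z; w] \in A.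
  by move=> Hw; rewrite inE Hw !inE !eqxx /= !orbT.
have sub : [set [set y; z; w1]; [set y; z; w2]; [set y; z; w3]] \subset A.
  by apply/subsetP=> f; rewrite !inE; case/orP => [/orP []|] /eqP -> /=; rewrite ?H1 ?H2 ?H3 !inE ?eqxx /= ?orbT.
have := subset_leq_card sub.
have d12 : [set y; z; w1] != [set y; z; w2] by apply: contra n12 => /eqP /(set3_inj H1) ->.
have d13 : [set y; z; w1] != [set y; z; w3] by apply: contra n13 => /eqP /(set3_inj H1) ->.
have d23 : [set y; z; w2] != [set y; z; w3] by apply: contra n23 => /eqP /(set3_inj H2) ->.
rewrite (setUC [set [set y; z; w1]; [set y; z; w2]]) cardsU1 cards2 !inE d12 eq_sym (negPf d13) eq_sym (negPf d23) => h E; by rewrite E in h.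
Qed.

Notation eI := (edgeI F S).

Lemma eI_sym u v : eI u v = eI v u.
Proof. by rewrite /edgeI andbC. Qed.

Lemma F1 (x y z : V) : [set x; y; z] \in F -> eI x y + eI y z + eI z x = 2.
Proof.
move=> H; have := Hface H; rewrite /faceI.
by move/forallP/(_ x)/forallP/(_ y)/forallP/(_ z); rewrite eqxx /= => /eqP.
Qed.

Lemma zstepE (x y z w : V) : [set x; y; z] \in F -> [set y; z; w] \in F -> w != x ->
  zstep F (x, y, z) (y, z, w).
Proof. by move=> H1 H2 n; rewrite /zstep /isState /= !eqxx H1 H2 n. Qed.

Ltac perm3 H := move: H; first [ by [] | by rewrite s3_r | by rewrite s3_l | by rewrite s3_12 | by rewrite s3_23 | by rewrite s3_rev ].

Lemma F2 (x y z w : V) : [set x; y; z] \in F -> [set w; y; z] \in F -> x != w ->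
  eI y z -> ~~ eI x y -> ~~ eI w y.
Proof.
move=> H1 H2 xw Iyz IIxy; have wx : w != x by rewrite eq_sym.
have H2' : [set y; z; w] \in F by perm3 H2.
have Fw := F1 H2.
case Sx: (S (x, y, z)).
  have St : S (y, z, w) by rewrite (HS1 (zstepE H1 H2' wx)).
  have [q [qy Hq]] := other_face H2'.
  have Sr : S (z, w, q) by rewrite (HS1 (zstepE H2' Hq qy)).
  have := Hhom Sx (zstepE H1 H2' wx) (zstepE H2' Hq qy).
  rewrite /= Iyz IIxy /= (eI_sym z w).
  move: Fw; rewrite Iyz (eI_sym z w); case: (eI w y); case: (eI w z) => //.
have Srev : S (z, y, x) by have := HS2 (s := (x, y, z)) H1; rewrite Sx.
have H3 : [set w; z; y] \in F by perm3 H2.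
have H4 : [set z; y; x] \in F by perm3 H1.
have Sw : S (w, z, y) by rewrite -(HS1 (zstepE H3 H4 xw)).
have [p [pz Hp]] := other_face H4.
have := Hhom Sw (zstepE H3 H4 xw) (zstepE H4 Hp pz).
rewrite /= (eI_sym z y) Iyz (eI_sym y x) IIxy /=.
move: Fw; rewrite Iyz (eI_sym z w); case: (eI w y); case: (eI w z) => //.
Qed.

Lemma F1_II (x y z : V) : [set x; y; z] \in F -> ~~ eI x y -> eI y z /\ eI z x.
Proof. by move/F1; case: (eI x y); case: (eI y z); case: (eI z x). Qed.
Lemma F1_I (x y z : V) : [set x; y; z] \in F -> eI y z -> eI z x -> ~~ eI x y.
Proof. by move/F1; case: (eI x y); case: (eI y z); case: (eI z x). Qed.

Notation vI := (vertexI F S).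

Lemma vIA (a b c : V) : [set a; b; c] \in F -> ~~ eI a b -> vI c.
Proof.
move=> H IIab.
pose P q := eI c q && [forall p, link F c q p ==> ~~ eI q p].
have step q r : P q -> link F c q r -> P r.
  case/andP=> Icq /forallP Hq Hqr; rewrite /link in Hqr.
  have IIqr : ~~ eI q r := implyP (Hq r) Hqr.
  have Hqrc : [set q; r; c] \in F by perm3 Hqr.
  have [Irc _] := F1_II Hqrc IIqr.
  rewrite /P; apply/andP; split; first by rewrite eI_sym.
  apply/forallP=> s; apply/implyP=> Hrs; rewrite /link in Hrs.
  case: (eqVneq s q) => [->|sq]; first by rewrite eI_sym.
  have Hsrc : [set s; r; c] \in F by perm3 Hrs.
  have qs : q != s by rewrite eq_sym.
  rewrite eI_sym; exact: (F2 Hqrc Hsrc qs Irc IIqr).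
have base : P a.
  have [_ Ica] := F1_II H IIab.
  rewrite /P; apply/andP; split => //.
  apply/forallP=> p; apply/implyP=> Hp; rewrite /link in Hp.
  case: (eqVneq p b) => [->|pb] //.
  have Hbac : [set b; a; c] \in F by perm3 H.
  have Hpac : [set p; a; c] \in F by perm3 Hp.
  have bp : b != p by rewrite eq_sym.
  have Iac : eI a c by rewrite eI_sym.
  have IIba : ~~ eI b a by rewrite eI_sym.
  rewrite eI_sym; exact: (F2 Hbac Hpac bp Iac IIba).
apply/forallP=> u; apply/implyP=> Hu.
have Hca : adj F c a by apply: (@adj_face c a b); perm3 H.
case/connectP: (Hlink Hca Hu) => p pth ->.
suff : P (last a p) by case/andP.
elim: p a base pth {H IIab Hca} => [|r p IH] q Pq //=.
case/andP=> Hqr pth; apply: IH pth; exact: step Pq Hqr.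
Qed.

Lemma vIB (c p q : V) : vI c -> [set c; p; q] \in F -> ~~ eI p q.
Proof.
move=> /forallP Hc H.
apply: (@F1_I p q c); first by perm3 H.
- rewrite eI_sym; apply: (implyP (Hc q)); apply: (@adj_face c q p); by perm3 H.
- apply: (implyP (Hc p)); exact: adj_face H.
Qed.

Lemma vIB' (c p q : V) : vI c -> [set c; p; q] \in F -> ~~ vI p.
Proof.
move=> Hc H; apply/negP=> /forallP /(_ q) /implyP Hp.
have := vIB Hc H; rewrite Hp //; apply: (@adj_face p q c); by perm3 H.
Qed.

Lemma vIC (x y z : V) : [set x; y; z] \in F -> [|| vI x, vI y | vI z].
Proof.
move=> H; have := F1 H.
case Exy: (eI x y); last by rewrite (vIA H) ?Exy ?orbT.
case Eyz: (eI y z); last by rewrite (@vIA y z x) ?Eyz //; perm3 H.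
case Ezx: (eI z x) => //.
by rewrite (@vIA z x y) ?Ezx ?orbT //; perm3 H.
Qed.

Lemma adj_sym u v : adj F u v = adj F v u.
Proof.
rewrite /adj eq_sym; congr andb.
by apply/existsP/existsP => -[f /andP [fF /andP [h1 h2]]]; exists f; rewrite fF h1 h2.
Qed.

Lemma adj_inface u v : adj F u v -> exists w, [set u; v; w] \in F.
Proof.
case/andP=> uv /existsP [f /andP [fF /andP [uf vf]]].
by have [w Ew] := face_dec fF uf vf uv; exists w; rewrite -Ew.
Qed.

Lemma vertex_face v : exists u w, [set v; u; w] \in F.
Proof.
have [f fF vf] := Hcov v.
have : 0 < #|f :\ v| by have := Hf3 fF; rewrite (cardsD1 v f) vf add1n; case=> ->.
case/card_gt0P=> u; rewrite !inE => /andP [uv uf].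
have uv' : v != u by rewrite eq_sym.
have [w Ew] := face_dec fF vf uf uv'.
by exists u, w; rewrite -Ew.
Qed.

Lemma face3 f : f \in F -> exists u v w, f = [set u; v; w].
Proof.
move=> fF.
have : 0 < #|f| by rewrite (Hf3 fF).
case/card_gt0P=> u uf.
have : 0 < #|f :\ u| by have := Hf3 fF; rewrite (cardsD1 u f) uf add1n; case=> ->.
case/card_gt0P=> v; rewrite !inE => /andP [vu vf].
have vu' : u != v by rewrite eq_sym.
have [w Ew] := face_dec fF uf vf vu'.
by exists u, v, w.
Qed.

Lemma nadj_ab a b : vI a -> vI b -> ~~ adj F a b.
Proof.
move=> Ia Ib; apply/negP => /adj_inface [w H].
by have := vIB' Ia H; rewrite Ib.
Qed.

Lemma faceBA a b p q : vI b -> (forall v, vI v -> v = a \/ v = b) ->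
  [set b; p; q] \in F -> [set a; p; q] \in F.
Proof.
move=> Ib Hab H; have [r [rb Hr]] := other_face H.
have nIp := vIB' Ib H.
have H' : [set b; q; p] \in F by perm3 H.
have nIq := vIB' Ib H'.
move: (vIC Hr); rewrite (negPf nIp) (negPf nIq) /= => /Hab [Era|Erb].
  by move: Hr; rewrite Era s3_l.
by rewrite Erb eqxx in rb.
Qed.

Lemma both a b v : a != b -> (forall v, vI v -> v = a \/ v = b) -> ~~ vI v ->
  adj F a v /\ adj F b v.
Proof.
move=> ab Hab nIv.
have [t [q [It Ht]]] : exists t q, vI t /\ [set t; v; q] \in F.
  have [u [w H]] := vertex_face v.
  move: (vIC H); rewrite (negPf nIv) /= => /orP [Iu|Iw].
    by exists u, w; split => //; perm3 H.
  by exists w, u; split => //; perm3 H.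
have [tv vq tq] := face_neq Ht.
have [r [rt Hr]] := other_face Ht.
have Hvt : adj F v t by apply: (@adj_face v t q); perm3 Ht.
have [t2 [It2 t2t Hvt2]] : exists t2, [/\ vI t2, t2 != t & adj F v t2].
  move: (vIC Hr); rewrite (negPf nIv) /= => /orP [Iq|Ir].
    by exists q; split => //; [rewrite eq_sym | exact: adj_face Hr].
  by exists r; split => //; apply: (@adj_face v r q); perm3 Hr.
rewrite !(adj_sym _ v).
case: (Hab _ It) => Et; case: (Hab _ It2) => Et2.
- by rewrite Et Et2 eqxx in t2t.
- by rewrite -Et -Et2.
- by rewrite -Et -Et2.
- by rewrite Et Et2 eqxx in t2t.
Qed.

Lemma face_ab a b f : a != b -> vI a -> vI b -> (forall v, vI v -> v = a \/ v = b) ->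
  f \in F -> exists p q, (f = [set a; p; q] \/ f = [set b; p; q]) /\ [set a; p; q] \in F.
Proof.
move=> ab Ia Ib Hab fF.
have [t [p [q [It Ef H]]]] : exists t p q, [/\ vI t, f = [set t; p; q] & [set t; p; q] \in F].
  have [u [v [w Ef]]] := face3 fF.
  have H := fF; rewrite Ef in H.
  case/or3P: (vIC H) => I.
  - by exists u, v, w; split.
  - by exists v, u, w; rewrite Ef -s3_12; split => //; rewrite -s3_12.
  - by exists w, u, v; rewrite Ef -s3_l; split => //; rewrite -s3_l.
exists p, q; case: (Hab _ It) => Et; rewrite -Et.
  by split => //; left.
by split; [right | apply: (faceBA Ib Hab); rewrite -Et].
Qed.

Lemma main_in : #|[set v | vI v]| = 2 -> exists2 n, 3 <= n & tri_iso F (BPfaces n).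
Proof.
move=> Hcard.
case/cards2P: (introT eqP Hcard) => a [b [ab Eab]].
have Ia : vI a.
  have : a \in [set v | vI v] by rewrite Eab !inE eqxx.
  by rewrite inE.
have Ib : vI b.
  have : b \in [set v | vI v] by rewrite Eab !inE eqxx orbT.
  by rewrite inE.
have Hab v : vI v -> v = a \/ v = b.
  have : (v \in [set v | vI v]) = vI v by rewrite inE.
  by rewrite Eab !inE => <- /orP [] /eqP; [left|right].
have Hba v : vI v -> v = b \/ v = a by case/Hab; [right|left].
have ba : b != a by rewrite eq_sym.
have [u [w Hauw]] := vertex_face a.
pose e := link F a.
have esym : forall p q, e p q -> e q p by move=> p q; rewrite /e /link => H; perm3 H.
have eirr : forall p q, e p q -> p != q by move=> p q /face_neq [].
have e3 : forall p q1 q2 q3, e p q1 -> e p q2 -> e p q3 ->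
    q1 != q2 -> q1 != q3 -> q2 != q3 -> False by move=> p q1 q2 q3; exact: at_most_two.
have eex : forall p q, e p q -> exists2 r, r != q & e p r.
  move=> p q H; have H' : [set q; a; p] \in F by move: H; rewrite /e /link => H; perm3 H.
  by have [r [rq Hr]] := other_face H'; exists r.
have [n [xx [n3 x00 inj [xmod xe edge cover]]]] := cycle_main esym eirr e3 eex (Hauw : e u w).
have adja y : adj F a y -> connect e u y.
  by move=> H; apply: Hlink H; exact: adj_face Hauw.
have xa i : xx i != a.
  by have [+ _ _] := face_neq (xe i : [set a; xx i; xx i.+1] \in F); rewrite eq_sym.
have xb i : xx i != b.
  apply/eqP=> Eb; have := nadj_ab Ia Ib; rewrite -Eb.
  by rewrite (adj_face (xe i : [set a; xx i; xx i.+1] \in F)).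
pose h (s : BPV n) : V := match s with inl i => xx i | inr c => if c then a else b end.
have hinj : injective h.
  move=> [i|[]] [j|[]] //= E.
  - by move: (inj _ _ (ltn_ord i) (ltn_ord j) E) => /val_inj ->.
  - by have := xa i; rewrite E eqxx.
  - by have := xb i; rewrite E eqxx.
  - by have := xa j; rewrite E eqxx.
  - by rewrite E eqxx in ab.
  - by have := xb j; rewrite E eqxx.
  - by rewrite E eqxx in ba.
have hbij : bijective h.
  apply: (@inj_card_bij (BPV n) V h hinj).
  have sub : [set: V] \subset h @: [set: BPV n].
    apply/subsetP => v _.
    case: (eqVneq v a) => [->|va]; first by apply/imsetP; exists (inr true).
    case: (eqVneq v b) => [->|vb]; first by apply/imsetP; exists (inr false).
    have nIv : ~~ vI v by apply/negP=> /Hab [] /eqP; rewrite ?(negPf va) ?(negPf vb).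
    have [Hav _] := both ab Hab nIv.
    have [i ilt ->] := cover _ (adja _ Hav).
    by apply/imsetP; exists (inl (Ordinal ilt)).
  by rewrite -cardsT -(cardsT (BPV n)); apply: leq_trans (subset_leq_card sub) (leq_imset_card _ _).
have himg (c : bool) (j : 'I_n) :
    h @: [set inr c; inl j; inl (ordS j)] = [set (if c then a else b); xx j; xx j.+1].
  by rewrite !imsetU !imset_set1 /= xmod.
have key (Y : {set BPV n}) : (h @: Y \in F) = (Y \in BPfaces n).
  apply/idP/idP.
  - move=> HY.
    have [p [q [Ef Hapq]]] := face_ab ab Ia Ib Hab HY.
    have Hpq : e p q by [].
    have [Hpa _ _] := face_neq Hapq.
    have := edge p q (adja p (adj_face Hapq)) Hpq.
    case=> j jn Hj; pose jo := Ordinal jn.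
    have Eapq : [set a; p; q] = [set a; xx jo; xx jo.+1].
      by case/orP: Hj => /andP [/eqP -> /eqP ->] //; rewrite s3_23.
    have Ebpq : [set b; p; q] = [set b; xx jo; xx jo.+1].
      by case/orP: Hj => /andP [/eqP -> /eqP ->] //; rewrite s3_23.
    case: Ef => Ef.
    + rewrite Eapq -(himg true jo) in Ef.
      rewrite (imset_inj hinj Ef) inE; apply/orP; left.
      by apply/imsetP; exists jo.
    + rewrite Ebpq -(himg false jo) in Ef.
      rewrite (imset_inj hinj Ef) inE; apply/orP; right.
      by apply/imsetP; exists jo.
  - rewrite inE => /orP [] /imsetP [j _ ->]; rewrite himg /=.
      exact: xe.
    apply: (faceBA Ia Hba); exact: xe.
case: hbij => g hg gh.
exists n => //; exists g; split; first by exists h.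
move=> X.
have -> : X = h @: (g @: X).
  by rewrite -imset_comp (eq_imset _ gh) imset_id.
by rewrite key -imset_comp (eq_imset _ hg) imset_id.
Qed.

End Main.

Theorem mainTheorem12 (V : finType) (F : {set {set V}}) (S : pred (state V)) :
  is_triangulation F ->
  z_orientation F S ->
  (forall f, f \in F -> faceI F S f) ->
  all_homogeneous F S ->
  #|[set v | vertexI F S v]| = 2 ->
  exists2 n, 3 <= n & tri_iso F (BPfaces n).
Proof.
move=> [V0 [Hf3 Hedge2 Hcov Hlink Hconn]] [HS1 HS2] Hface Hhom Hcard.
exact: (main_in Hf3 Hedge2 HS1 HS2 Hface Hhom Hcov Hlink Hcard).
Qed.
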